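(* Assume (A1) and (A2) below. Then for any $s\in\mathcal S$ and policy $\pi$, $$\mathbb{E}_{p\sim\Phi_t}\Big[\mathbb{V}_{a,s'\sim\pi,p}\big[V^{\pi,p}(s')\big]-\mathbb{V}_{a,s'\sim\pi,p}\big[\bar V^\pi_t(s')\big]\Big]\ge 0.$$
   Context: Let $\mathcal S$ be a finite state space, $\mathcal A$ a finite action space, $r:\mathcal S\times\mathcal A\to\mathbb R$ a known bounded (deterministic) reward function and $\gamma\in[0,1)$ a discount factor. A transition function $p$ assigns to each $(s,a)$ a probability distribution $p(\cdot\mid s,a)$ on $\mathcal S$. A policy $\pi$ gives distributions $\pi(\cdot\mid s)$ on $\mathcal A$. For a transition function $p$, the value function is $V^{\pi,p}(s)=\mathbb E\big[\sum_{h\ge 0}\gamma^h r(s_h,a_h)\mid s_0=s\big]$ with $a_h\sim\pi(\cdot\mid s_h)$, $s_{h+1}\sim p(\cdot\mid s_h,a_h)$. The transition function $p$ is a random variable with distribution $\Phi_t$, and $\bar V^\pi_t(s)=\mathbb E_{p\sim\Phi_t}[V^{\pi,p}(s)]$. For a transition function $q$ and a function $f$ on $\mathcal S$, $\mathbb V_{a,s'\sim\pi,q}[f(s')]$ denotes the variance of $f(s')$ when $a\sim\pi(\cdot\mid s)$ and $s'\sim q(\cdot\mid s,a)$. Assumptions: (A1) (independent transitions) $p(s'\mid x,a)$ and $p(s'\mid y,a)$ are independent random variables if $x\neq y$; (A2) (acyclic MDP) the MDP is a directed acyclic graph, i.e., states are not visited more than once in any given episode. *)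

(* Defs.v *)
From HB Require Import structures.
From mathcomp Require Import all_boot all_order all_algebra.
From mathcomp Require Import all_classical all_reals all_analysis.
Set Implicit Arguments. Unset Strict Implicit. Unset Printing Implicit Defensive.
Import Order.TTheory GRing.Theory Num.Theory.
Local Open Scope classical_set_scope.
Local Open Scope ring_scope.

Section MDP.
Variables (R : realType) (S A : finType).

(* A transition function: q s a s' = q(s' | s, a). *)
Definition trans := S -> A -> S -> R.
(* A policy: pol s a = pi(a | s). *)
Definition policy := S -> A -> R.

Definition is_trans (q : trans) : Prop :=
  forall s a, (forall s', 0 <= q s a s') /\ \sum_(s' : S) q s a s' = 1.

Definition is_policy (pol : policy) : Prop :=
  forall s, (forall a, 0 <= pol s a) /\ \sum_(a : A) pol s a = 1.

Fixpoint state_dist (q : trans) (pol : policy) (s : S) (h : nat) : S -> R :=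
  match h with
  | 0 => fun x => if x == s then 1 else 0
  | h'.+1 => fun y =>
      \sum_(x : S) state_dist q pol s h' x * \sum_(a : A) pol x a * q x a y
  end.

Definition exp_reward (r : S -> A -> R) (q : trans) (pol : policy) (s : S)
  (h : nat) : R :=
  \sum_(x : S) state_dist q pol s h x * \sum_(a : A) pol x a * r x a.

Definition value (r : S -> A -> R) (gamma : R) (q : trans) (pol : policy)
  (s : S) : R :=
  limn (fun n => \sum_(0 <= h < n) gamma ^+ h * exp_reward r q pol s h).

Definition var_next (q : trans) (pol : policy) (s : S) (f : S -> R) : R :=
  let m := \sum_(a : A) \sum_(s' : S) pol s a * q s a s' * f s' in
  \sum_(a : A) \sum_(s' : S) pol s a * q s a s' * (f s' - m) ^+ 2.

End MDP.

Section Random.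
Variables (R : realType) (S A : finType) (d : measure_display)
  (Omega : measurableType d) (P : probability Omega R).

(* the random transition function p : Omega -> trans, distributed as Phi_t *)
Definition random_trans (p : Omega -> trans R S A) : Prop :=
  (forall w, is_trans (p w)) /\
  (forall x a y, measurable_fun setT (fun w => p w x a y)).

Definition expect (X : Omega -> R) : R := fine (\int[P]_w (X w)%:E).

(* (A1): the random rows p(. | x, .), x in S, are mutually independent:
   product rule for every family of Borel "rectangle" events. *)
Definition indep_rows (p : Omega -> trans R S A) : Prop :=
  forall B : S -> A -> S -> set R,
    (forall x a y, measurable (B x a y)) ->
    fine (P [set w | forall x a y, B x a y (p w x a y)]) =
    \prod_(x : S) fine (P [set w | forall a y, B x a y (p w x a y)]).

(* (A2): acyclic MDP: a fixed DAG (rank strictly increases along every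
   possible transition), terminal states being modelled as absorbing. *)
Definition acyclic (p : Omega -> trans R S A) : Prop :=
  exists rank : S -> nat,
    forall w x a y, 0 < p w x a y ->
      (rank x < rank y)%N \/ (forall w' a', p w' x a' x = 1).

End Random.

(* Main.v *)
Require Import Defs.
Set Warnings "-notation-overridden,-ambiguous-paths,-notation-incompatible-prefix".
From HB Require Import structures.
From mathcomp Require Import all_boot all_order all_algebra.
From mathcomp Require Import all_classical all_reals all_analysis.
From mathcomp Require Import ring lra measurable_realfun.
Set Implicit Arguments. Unset Strict Implicit. Unset Printing Implicit Defensive.
Import Order.TTheory GRing.Theory Num.Theory.
Local Open Scope classical_set_scope.
Local Open Scope ring_scope.

Section G.
Context (R : realType) (d : measure_display) (Omega : measurableType d) (P : probability Omega R).
Local Open Scope ereal_scope.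

Definition subsig (G : set (set Omega)) := <<s G>> `<=` measurable.

Lemma subsigP (G : set (set Omega)) : G `<=` measurable -> subsig G.
Proof. by move=> GM; apply: smallest_sub => //; exact: sigma_algebra_measurable. Qed.

Lemma mfun_sub (G : set (set Omega)) (f : Omega -> R) : subsig G ->
  measurable_fun [set: g_sigma_algebraType G] (f : g_sigma_algebraType G -> R) ->
  measurable_fun [set: Omega] f.
Proof. by move=> sG mf _ B mB; apply: sG; exact: mf. Qed.
Arguments mfun_sub {G f}.

Definition indep2 (A B : set Omega) := P (A `&` B) = P A * P B.

Lemma PfinE (A : set Omega) : measurable A -> P A = (fine (P A))%:E.
Proof. by move=> mA; rewrite fineK // fin_num_measure. Qed.

Lemma indepC (X e : set Omega) : measurable X -> measurable e ->
  indep2 X e -> indep2 (~` X) e.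
Proof.
move=> mX me; rewrite /indep2 => h.
rewrite probability_setC // setIC -setDE measureD //; last first.
  by rewrite (le_lt_trans (probability_le1 _ _)) ?ltry.
apply: (@eq_trans _ _ (P e - P X * P e)).
  by congr (_ - _); rewrite setIC; exact: h.
rewrite (PfinE mX) (PfinE me).
rewrite -EFinM -EFinB -EFinB -EFinM.
by congr EFin; ring.
Qed.

Lemma indepU (F : (set Omega)^nat) e : (forall n, measurable (F n)) -> measurable e ->
  trivIset setT F -> (forall n, indep2 (F n) e) -> indep2 (\bigcup_k F k) e.
Proof.
move=> mF me tF hF; rewrite /indep2 setI_bigcupl.
rewrite /indep2 in hF.
rewrite measure_bigcup //=; last 2 first.
+ by move=> i _; apply: measurableI.
+ exact: trivIset_setIr.
rewrite measure_bigcup //=.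
under eq_eseriesr do rewrite hF.
rewrite (PfinE me); under eq_eseriesr do rewrite muleC.
rewrite nneseriesZl; first by rewrite muleC.
move=> i _; exact: measure_ge0.
Qed.

Lemma indep_ext (G : set (set Omega)) (e : set Omega) :
  setI_closed G -> subsig G -> measurable e ->
  (forall g, G g -> indep2 g e) -> forall S, <<s G>> S -> indep2 S e.
Proof.
move=> GI sG me Ge S GS.
apply: (@dynkin_induction _ (g_sigma_algebraType G) G (fun S => indep2 S e) erefl GI) => //.
- by rewrite /indep2 setTI probability_setT mul1e.
- by move=> X mX h; apply: indepC => //; exact: sG.
- move=> F mF tF hF; apply: indepU => // n; exact: (sG _ (mF n)).
Qed.

Import HBNNSimple.

Lemma nnsfun_int (G : set (set Omega)) (sG : subsig G)
  (h : {nnsfun (g_sigma_algebraType G) >-> R}) (g : Omega -> R) (c : R) :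
  measurable_fun [set: Omega] g -> (forall w, (0 <= g w)%R) ->
  (forall B, <<s G>> B -> \int[P]_(w in B) (g w)%:E = P B * c%:E) ->
  \int[P]_w ((h w)%:E * (g w)%:E) =
  (\sum_(y \in range h) y%:E * P (h @^-1` [set y])) * c%:E.
Proof.
move=> mg g0 hB.
have mh : measurable_fun [set: Omega] (h : Omega -> R) :=
  mfun_sub sG (measurable_funP h).
have mpreG y : <<s G>> (h @^-1` [set y]).
  have := measurable_funP h measurableT _ (measurable_set1 y).
  by rewrite setTI.
have mpre y : measurable (h @^-1` [set y] : set Omega) := sG _ (mpreG y).
transitivity (\int[P]_w (\sum_(y \in range h)
    (y * \1_(h @^-1` [set y]) w)%:E * (g w)%:E)).
  apply: eq_integral => w _.
  rewrite -ge0_mule_fsuml => [|y]; last exact: nnfun_muleindic_ge0.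
  by rewrite fsumEFin // {1}(fimfunE h w).
rewrite ge0_integral_fsum //; last 2 first.
- move=> y; apply: emeasurable_funM; apply/measurable_EFinP => //.
  apply: measurable_funM => //; exact: measurable_indic.
- move=> y w _; apply: mule_ge0; last by rewrite lee_fin.
  by rewrite EFinM nnfun_muleindic_ge0.
rewrite ge0_mule_fsuml; last first.
  move=> y; have [y0|y0] := ltP y 0%R.
    by rewrite preimage_nnfun0 // measure0 mule0.
  by rewrite mule_ge0.
apply: eq_fsbigr => y yr.
have y0 : (0 <= y)%R.
  by move: yr; rewrite inE => -[w _ <-]; exact: fun_ge0.
under eq_integral do rewrite EFinM -muleA.
rewrite ge0_integralZl //; last 2 first.
- apply: emeasurable_funM; apply/measurable_EFinP => //; exact: measurable_indic.
- by move=> w _; rewrite mule_ge0 // lee_fin.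
rewrite -muleA; congr (_ * _).
rewrite -hB //.
rewrite [in RHS]integral_mkcond.
apply: eq_integral => w _.
by rewrite epatch_indic /= muleC.
Qed.

Lemma approx_prod (G : set (set Omega)) (f g : Omega -> R) (c : R) :
  subsig G ->
  measurable_fun [set: g_sigma_algebraType G] (f : g_sigma_algebraType G -> R) ->
  (forall w, (0 <= f w)%R) -> measurable_fun [set: Omega] g ->
  (forall w, (0 <= g w)%R) ->
  (forall B, <<s G>> B -> \int[P]_(w in B) (g w)%:E = P B * c%:E) ->
  \int[P]_w ((f w)%:E * (g w)%:E) = (\int[P]_w (f w)%:E) * c%:E.
Proof.
move=> sG mf f0 mg g0 hB.
have mfE : measurable_fun [set: g_sigma_algebraType G]
    (EFin \o f : g_sigma_algebraType G -> \bar R) by exact/measurable_EFinP.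
pose h := nnsfun_approx measurableT mfE.
have hcvg w : (EFin \o h ^~ w) @ \oo --> (f w)%:E.
  by apply: cvg_nnsfun_approx => // x _; rewrite lee_fin.
have mh n : measurable_fun [set: Omega] (h n : Omega -> R) :=
  mfun_sub sG (measurable_funP (h n)).
have hnd w : {homo (h ^~ w) : m n / (m <= n)%N >-> (m <= n)%R}.
  by move=> m n mn; exact/lefP/nd_nnsfun_approx.
have hB1 B : <<s G>> B -> \int[P]_(w in B) (cst 1%R w)%:E = P B * 1%:E.
  move=> GB; transitivity (\int[P]_(w in B) (cst 1 w)); first by apply: eq_integral.
  by rewrite integral_cst ?mul1e ?mule1 //; exact: sG.
have key n : \int[P]_w ((h n w)%:E * (g w)%:E) =
    (\int[P]_w (h n w)%:E) * c%:E.
  rewrite (@nnsfun_int G sG (h n) g c mg g0 hB).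
  transitivity (\int[P]_w ((h n w)%:E * (cst 1%R w)%:E) * c%:E).
    by rewrite (@nnsfun_int _ sG (h n) (cst 1%R) 1%R) ?mule1 //; exact: measurable_cst.
  by congr (_ * _); apply: eq_integral => w _; rewrite mule1.
have I1 : (\int[P]_w (h n w)%:E) @[n --> \oo] --> \int[P]_w (f w)%:E.
  have -> : \int[P]_w (f w)%:E = \int[P]_w (limn (EFin \o h ^~ w)).
    by apply: eq_integral => w _; apply/esym/cvg_lim => //; exact: hcvg.
  apply: (@cvg_monotone_convergence _ _ _ P _ measurableT (fun n w => (h n w)%:E)).
  - by move=> n; exact/measurable_EFinP.
  - by move=> n w _; rewrite lee_fin.
  - by move=> w _ m n mn; rewrite lee_fin; exact: hnd.
have I2 : \int[P]_w ((f w)%:E * (g w)%:E) =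
    limn (fun n => \int[P]_w ((h n w)%:E * (g w)%:E)).
  rewrite -monotone_convergence //.
  - apply: eq_integral => w _; apply/esym/cvg_lim => //.
    by apply: cvgeZr => //; exact: hcvg.
  - by move=> n; apply: emeasurable_funM; exact/measurable_EFinP.
  - by move=> n w _; rewrite mule_ge0 // lee_fin.
  - by move=> w _ m n mn; rewrite lee_wpmul2r ?lee_fin //; exact: hnd.
rewrite I2; under eq_fun do rewrite key.
by apply/cvg_lim => //; apply: cvgeZr.
Qed.
End G.
Arguments subsig {d Omega}.
Arguments subsigP {d Omega G}.
Arguments mfun_sub {R d Omega G f}.
Arguments indep2 {R d Omega} P.
Arguments PfinE {R d Omega} P {A}.
Arguments indep_ext {R d Omega} P {G e}.
Arguments approx_prod {R d Omega} P {G f g c}.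

Section Alg.
Context (R : realType) (S A : finType).
Variables (q : trans R S A) (pol : policy R S A) (s : S).

Definition mean_next (f : S -> R) := \sum_a \sum_y pol s a * q s a y * f y.
Definition cov_next (f g : S -> R) :=
  \sum_a \sum_y pol s a * q s a y * ((f y - mean_next f) * (g y - mean_next g)).

Lemma var_nextE f : var_next q pol s f =
  \sum_a \sum_y pol s a * q s a y * (f y - mean_next f) ^+ 2.
Proof. by []. Qed.

Lemma mean_add f g : mean_next (fun y => f y + g y) = mean_next f + mean_next g.
Proof.
rewrite /mean_next -big_split; apply: eq_bigr => a _.
rewrite -big_split; apply: eq_bigr => y _; by rewrite mulrDr.
Qed.

Lemma var_add f g : var_next q pol s (fun y => f y + g y) =
  var_next q pol s f + var_next q pol s g + 2 * cov_next f g.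
Proof.
rewrite !var_nextE /cov_next mean_add.
move: (mean_next f) (mean_next g) => mf mg.
rewrite mulr_sumr -!big_split; apply: eq_bigr => a _.
rewrite mulr_sumr -!big_split; apply: eq_bigr => y _ /=; ring.
Qed.

Hypothesis sum1 : \sum_a \sum_y pol s a * q s a y = 1.

Lemma cov_alt f g : cov_next f g =
  \sum_a \sum_y (pol s a * q s a y * (g y - mean_next g)) * f y.
Proof.
have h0 : \sum_a \sum_y pol s a * q s a y * (g y - mean_next g) = 0.
  transitivity (\sum_a \sum_y pol s a * q s a y * g y -
     (\sum_a \sum_y pol s a * q s a y) * mean_next g).
    rewrite mulr_suml -sumrB; apply: eq_bigr => a _.
    rewrite mulr_suml -sumrB; apply: eq_bigr => y _; ring.
  by rewrite sum1 mul1r; exact: subrr.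
rewrite /cov_next.
transitivity (\sum_a \sum_y ((pol s a * q s a y * (g y - mean_next g)) * f y
   - mean_next f * (pol s a * q s a y * (g y - mean_next g)))).
  by apply: eq_bigr => a _; apply: eq_bigr => y _; ring.
under eq_bigr do rewrite sumrB.
rewrite sumrB.
under [X in _ - X]eq_bigr do rewrite -mulr_sumr.
by rewrite -mulr_sumr h0 mulr0 subr0.
Qed.

End Alg.

Section BM.
Context (R : realType) (d : measure_display) (Omega : measurableType d)
  (P : probability Omega R).
Local Notation Ex := (expect P).

Definition bnd (X : Omega -> R) := exists M, forall w, `|X w| <= M.
Definition bm (X : Omega -> R) := measurable_fun setT X /\ bnd X.

Lemma bm_cst c : bm (fun _ => c).
Proof. by split; [exact: measurable_cst | exists `|c|]. Qed.

Lemma bmD X Y : bm X -> bm Y -> bm (fun w => X w + Y w).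
Proof.
move=> [mX [M hM]] [mY [N hN]]; split; first exact: measurable_funD.
exists (M + N) => w; apply: (le_trans (ler_normD _ _)); exact: lerD.
Qed.

Lemma bmN X : bm X -> bm (fun w => - X w).
Proof.
by move=> [mX [M hM]]; split; [exact: measurableT_comp | exists M => w; rewrite normrN].
Qed.

Lemma bmB X Y : bm X -> bm Y -> bm (fun w => X w - Y w).
Proof. by move=> hX hY; apply: bmD => //; exact: bmN. Qed.

Lemma bmM X Y : bm X -> bm Y -> bm (fun w => X w * Y w).
Proof.
move=> [mX [M hM]] [mY [N hN]]; split; first exact: measurable_funM.
exists (M * N) => w; rewrite normrM; exact: ler_pM.
Qed.

Lemma bm_sum (I : Type) (r : seq I) (F : I -> Omega -> R) :
  (forall i, bm (F i)) -> bm (fun w => \sum_(i <- r) F i w).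
Proof.
move=> hF; elim: r => [|i r IH].
  have -> : (fun w => \sum_(i <- [::]) F i w) = fun _ => 0.
    by apply/funext => w; rewrite big_nil.
  exact: bm_cst.
have -> : (fun w => \sum_(j <- i :: r) F j w) = (fun w => F i w + \sum_(j <- r) F j w).
  by apply/funext => w; rewrite big_cons.
exact: bmD.
Qed.

Lemma bnd_cst c : bnd (fun _ => c).
Proof. by exists `|c|. Qed.

Lemma bndD X Y : bnd X -> bnd Y -> bnd (fun w => X w + Y w).
Proof.
move=> [M hM] [N hN]; exists (M + N) => w.
apply: (le_trans (ler_normD _ _)); exact: lerD.
Qed.

Lemma bndB X Y : bnd X -> bnd Y -> bnd (fun w => X w - Y w).
Proof.
move=> [M hM] [N hN]; exists (M + N) => w.
apply: (le_trans (ler_normB _ _)); exact: lerD.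
Qed.

Lemma bndM X Y : bnd X -> bnd Y -> bnd (fun w => X w * Y w).
Proof. by move=> [M hM] [N hN]; exists (M * N) => w; rewrite normrM; exact: ler_pM. Qed.

Lemma bnd_sum (I : Type) (r : seq I) (F : I -> Omega -> R) :
  (forall i, bnd (F i)) -> bnd (fun w => \sum_(i <- r) F i w).
Proof.
move=> hF; elim: r => [|i r IH].
  by exists 0 => w; rewrite big_nil normr0.
have -> : (fun w => \sum_(j <- i :: r) F j w) = (fun w => F i w + \sum_(j <- r) F j w).
  by apply/funext => w; rewrite big_cons.
exact: bndD.
Qed.

Lemma bm_int X : bm X -> P.-integrable setT (EFin \o X).
Proof.
move=> [mX [M hM]]; apply: measurable_bounded_integrable => //.
  exact: (le_lt_trans (probability_le1 P measurableT) (ltry 1)).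
exists M; split; first by rewrite num_real.
move=> N MN x _; exact: le_trans (hM x) (ltW MN).
Qed.

Lemma ExD X Y : bm X -> bm Y -> Ex (fun w => X w + Y w) = Ex X + Ex Y.
Proof. by move=> hX hY; exact: (RintegralD measurableT (bm_int hX) (bm_int hY)). Qed.

Lemma ExZ c X : bm X -> Ex (fun w => c * X w) = c * Ex X.
Proof. move=> hX; have := RintegralZl c measurableT (bm_int hX). rewrite /Rintegral /expect. exact. Qed.

Lemma Ex_cst c : Ex (fun _ => c) = c.
Proof.
rewrite /expect (_ : (fun w => c%:E) = cst c%:E) //.
rewrite integral_cst //.
apply: (@eq_trans _ _ (fine (c%:E * 1))); last by rewrite mule1.
by congr (fine (_ * _)); exact: probability_setT.
Qed.

Lemma ExB X Y : bm X -> bm Y -> Ex (fun w => X w - Y w) = Ex X - Ex Y.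
Proof.
move=> hX hY; rewrite ExD //; last exact: bmN.
by rewrite (_ : (fun w => - Y w) = (fun w => -1 * Y w)) ?ExZ ?mulN1r //; apply/funext => w; rewrite mulN1r.
Qed.

Lemma Ex_sum (I : Type) (r : seq I) (F : I -> Omega -> R) :
  (forall i, bm (F i)) -> Ex (fun w => \sum_(i <- r) F i w) = \sum_(i <- r) Ex (F i).
Proof.
move=> hF; elim: r => [|i r IH].
  rewrite big_nil (_ : (fun w => \sum_(i <- [::]) F i w) = fun _ => 0) ?Ex_cst //.
  by apply/funext => w; rewrite big_nil.
rewrite big_cons -IH (_ : (fun w => \sum_(j <- i :: r) F j w) =
  (fun w => F i w + \sum_(j <- r) F j w)); last by apply/funext => w; rewrite big_cons.
by rewrite ExD //; exact: bm_sum.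
Qed.

Lemma Ex_ge0 X : (forall w, 0 <= X w) -> 0 <= Ex X.
Proof. by move=> h; apply: Rintegral_ge0 => w _. Qed.

Lemma int_Ex X : bm X -> (\int[P]_w (X w)%:E)%E = (Ex X)%:E.
Proof. by move=> hX; rewrite /expect fineK // integrable_fin_num // bm_int. Qed.

End BM.
Arguments bm_int {R d Omega P X}.
Arguments ExD {R d Omega P X Y}.
Arguments ExZ {R d Omega P} c {X}.
Arguments Ex_cst {R d Omega P} c.
Arguments ExB {R d Omega P X Y}.
Arguments Ex_sum {R d Omega P I} r {F}.
Arguments Ex_ge0 {R d Omega P X}.
Arguments int_Ex {R d Omega P X}.
Arguments bm_cst {R d Omega} c.

Section Indep.
Context (R : realType) (S A : finType) (d : measure_display)
  (Omega : measurableType d) (P : probability Omega R)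
  (p : Omega -> trans R S A) (s : S).
Hypothesis rp : random_trans p.
Hypothesis ip : indep_rows P p.
Local Open Scope ereal_scope.

Lemma meas_forall {I : finType} (F : I -> set Omega) :
  (forall i, measurable (F i)) -> measurable [set w | forall i, F i w].
Proof.
move=> mF.
have : measurable [set w | forall i, i \in enum I -> F i w].
  elim: (enum I) => [|x l IH].
    rewrite (_ : [set w | _] = setT) //.
    by apply/seteqP; split => w //= _ i; rewrite in_nil.
  rewrite (_ : [set w | _] = F x `&` [set w | forall i, i \in l -> F i w]).
    exact: measurableI.
  apply/seteqP; split => w /=.
    move=> h; split; first by apply: h; rewrite mem_head.
    by move=> i il; apply: h; rewrite in_cons il orbT.
  by move=> [Fx h] i; rewrite in_cons => /orP[/eqP->//|]; exact: h.
move=> h; rewrite (_ : [set w | forall i, F i w] =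
  [set w | forall i, i \in enum I -> F i w]) //.
by apply/seteqP; split => w /= H i; [move=> _; exact: H | apply: H; rewrite mem_enum].
Qed.

Lemma meas_pre x a y (B : set R) : measurable B ->
  measurable [set w | B (p w x a y)].
Proof. by move=> mB; have := rp.2 x a y measurableT _ mB; rewrite setTI. Qed.

Definition E1 : set (set Omega) := [set e | exists2 B : A -> S -> set R,
  (forall a y, measurable (B a y)) & e = [set w | forall a y, B a y (p w s a y)]].
Definition E2 : set (set Omega) := [set e | exists2 B : S -> A -> S -> set R,
  (forall x a y, measurable (B x a y)) &
  e = [set w | forall x a y, x != s -> B x a y (p w x a y)]].

Lemma E1_meas : E1 `<=` measurable.
Proof.
move=> _ [B mB ->].
have h a : measurable [set w | forall y, B a y (p w s a y)].
  by apply: (@meas_forall _ (fun y => [set w | B a y (p w s a y)])) => y; exact: meas_pre.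
exact: (meas_forall h).
Qed.

Lemma E2_meas : E2 `<=` measurable.
Proof.
move=> _ [B mB ->].
apply: (@meas_forall _ (fun x => [set w | forall a y, x != s -> B x a y (p w x a y)])) => x.
apply: (@meas_forall _ (fun a => [set w | forall y, x != s -> B x a y (p w x a y)])) => a.
apply: (@meas_forall _ (fun y => [set w | x != s -> B x a y (p w x a y)])) => y.
have [->|xs] := eqVneq x s.
  by rewrite (_ : [set w | _] = setT) //; apply/seteqP; split => w //= _; rewrite eqxx.
rewrite (_ : [set w | _] = [set w | B x a y (p w x a y)]); first exact: meas_pre.
by apply/seteqP; split => w /=; [move=> h; exact: h | move=> h _].
Qed.

Lemma E1_setI : setI_closed E1.
Proof.
move=> _ _ [B1 mB1 ->] [B2 mB2 ->].
exists (fun a y => B1 a y `&` B2 a y); first by move=> a y; exact: measurableI.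
apply/seteqP; split => w /=.
  by move=> [h1 h2] a y; split; [exact: h1 | exact: h2].
by move=> h; split => a y; have [] := h a y.
Qed.

Lemma E2_setI : setI_closed E2.
Proof.
move=> _ _ [B1 mB1 ->] [B2 mB2 ->].
exists (fun x a y => B1 x a y `&` B2 x a y); first by move=> x a y; exact: measurableI.
apply/seteqP; split => w /=.
  by move=> [h1 h2] x a y xs; split; [exact: h1 | exact: h2].
by move=> h; split => x a y xs; have [] := h x a y xs.
Qed.

Lemma E12_indep e1 e2 : E1 e1 -> E2 e2 -> indep2 P e1 e2.
Proof.
move=> E1e1 E2e2.
have me1 := E1_meas E1e1; have me2 := E2_meas E2e2.
move: E1e1 E2e2 me1 me2 => [B1 mB1 ->] [B2 mB2 ->] me1 me2.
pose B x := if x == s then B1 else B2 x.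
pose C x := if x == s then (fun (_ : A) (_ : S) => @setT R) else B2 x.
have mB x a y : measurable (B x a y) by rewrite /B; case: ifP.
have mC x a y : measurable (C x a y) by rewrite /C; case: ifP.
have hB := ip mB; have hC := ip mC.
have eB : [set w | forall x a y, B x a y (p w x a y)] =
    [set w | forall a y, B1 a y (p w s a y)] `&`
    [set w | forall x a y, x != s -> B2 x a y (p w x a y)].
  apply/seteqP; split => w /=.
    move=> h; split; first by move=> a y; have := h s a y; rewrite /B eqxx.
    by move=> x a y xs; have := h x a y; rewrite /B (negbTE xs).
  move=> [h1 h2] x a y; rewrite /B; case: eqP => [->|/eqP xs]; first exact: h1.
  exact: h2.
have eC : [set w | forall x a y, C x a y (p w x a y)] =
    [set w | forall x a y, x != s -> B2 x a y (p w x a y)].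
  apply/seteqP; split => w /=.
    by move=> h x a y xs; have := h x a y; rewrite /C (negbTE xs).
  by move=> h x a y; rewrite /C; case: eqP => [//|/eqP xs]; exact: h.
rewrite eB in hB; rewrite eC in hC.
rewrite /indep2 (PfinE P (measurableI _ _ me1 me2)) hB (PfinE P me1) (PfinE P me2) hC.
rewrite -EFinM; congr EFin.
rewrite (bigD1 s) //= [in RHS](bigD1 s) //=.
have -> : [set w | forall a y, B s a y (p w s a y)] = [set w | forall a y, B1 a y (p w s a y)].
  by rewrite /B eqxx.
have -> : [set w | forall a y, C s a y (p w s a y)] = setT.
  by rewrite /C eqxx; apply/seteqP; split.
rewrite probability_setT /= mul1r; congr (_ * _)%R.
apply: eq_bigr => x xs.
by rewrite /B /C (negbTE xs).
Qed.


Lemma sig_indep (X Y : set Omega) : <<s E1>> X -> <<s E2>> Y -> indep2 P X Y.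
Proof.
move=> hX hY.
have h1 e2 : E2 e2 -> forall Z, <<s E1>> Z -> indep2 P Z e2.
  move=> E2e; apply: (indep_ext P E1_setI (subsigP E1_meas) (E2_meas E2e)).
  by move=> g Eg; exact: E12_indep.
have h2 : forall Z, <<s E2>> Z -> indep2 P Z X.
  apply: (indep_ext P E2_setI (subsigP E2_meas) (subsigP E1_meas _ hX)).
  by move=> g Eg; rewrite /indep2 setIC muleC; exact: h1.
by rewrite /indep2 setIC muleC; exact: h2.
Qed.

Lemma indep_prod (F G : Omega -> R) :
  measurable_fun [set: g_sigma_algebraType E1] (F : g_sigma_algebraType E1 -> R) ->
  (forall w, 0 <= F w)%R ->
  measurable_fun [set: g_sigma_algebraType E2] (G : g_sigma_algebraType E2 -> R) ->
  (forall w, 0 <= G w)%R ->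
  P.-integrable setT (EFin \o G) ->
  \int[P]_w ((F w)%:E * (G w)%:E) = (\int[P]_w (F w)%:E) * (\int[P]_w (G w)%:E).
Proof.
move=> mF F0 mG G0 iG.
have sG1 := subsigP E1_meas; have sG2 := subsigP E2_meas.
have mGO := mfun_sub sG2 mG.
have cE : \int[P]_w (G w)%:E = (fine (\int[P]_w (G w)%:E))%:E.
  by rewrite fineK // integrable_fin_num.
rewrite cE.
apply: (approx_prod P sG1 mF F0 mGO G0) => B hB.
have mB : measurable B := sG1 _ hB.
have := @approx_prod _ _ _ P _ G (\1_B) (fine (P B)) sG2 mG G0 (measurable_indic mB).
have I0 : forall w, (0 <= \1_B w :> R)%R by move=> w; rewrite indicE.
move=> /(_ I0) h.
rewrite -cE.
transitivity (\int[P]_w ((G w)%:E * (\1_B w)%:E)).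
  rewrite integral_mkcond; apply: eq_integral => w _; by rewrite epatch_indic.
rewrite h; last first.
  move=> B2 hB2; rewrite integral_indic //; last exact: sG2.
  rewrite -(PfinE P mB) muleC; exact: sig_indep.
by rewrite -(PfinE P mB) muleC.
Qed.


End Indep.

Section Indep2.
Context (R : realType) (S A : finType) (d : measure_display)
  (Omega : measurableType d) (P : probability Omega R)
  (p : Omega -> trans R S A) (s : S).
Hypothesis rp : random_trans p.
Hypothesis ip : indep_rows P p.
Let E1 := E1 p s.
Let E2 := E2 p s.

Lemma Ex_indep0 (F Y : Omega -> R) :
  measurable_fun [set: g_sigma_algebraType E1] (F : g_sigma_algebraType E1 -> R) ->
  bnd F ->
  measurable_fun [set: g_sigma_algebraType E2] (Y : g_sigma_algebraType E2 -> R) ->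
  bnd Y -> (expect P Y = 0)%R -> (expect P (fun w => F w * Y w) = 0)%R.
Proof.
move=> mF [K hK] mY [M hM] EY.
have sG1 := subsigP (E1_meas rp (s:=s)); have sG2 := subsigP (E2_meas rp (s:=s)).
have mF' : measurable_fun [set: g_sigma_algebraType E1]
    ((fun w => F w + K) : g_sigma_algebraType E1 -> R).
  by apply: measurable_funD => //; exact: measurable_cst.
have mY' : measurable_fun [set: g_sigma_algebraType E2]
    ((fun w => Y w + M) : g_sigma_algebraType E2 -> R).
  by apply: measurable_funD => //; exact: measurable_cst.
have F0 w : (0 <= F w + K)%R.
  by rewrite -lerBlDr sub0r; have := hK w; rewrite ler_norml => /andP[].
have Y0 w : (0 <= Y w + M)%R.
  by rewrite -lerBlDr sub0r; have := hM w; rewrite ler_norml => /andP[].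
have bF : bm F by split; [exact: mfun_sub sG1 mF | exists K].
have bY : bm Y by split; [exact: mfun_sub sG2 mY | exists M].
have bF' : bm (fun w => F w + K) by apply: bmD => //; exact: bm_cst.
have bY' : bm (fun w => Y w + M) by apply: bmD => //; exact: bm_cst.
have h := indep_prod rp ip mF' F0 mY' Y0 (bm_int bY').
rewrite (int_Ex bF') (int_Ex bY') -EFinM in h.
rewrite (int_Ex (bmM bF' bY')) in h.
move: h => [h].
have bFY := bmM bF bY.
have bMF : bm (fun w => M * F w) := bmM (bm_cst M) bF.
have bKY : bm (fun w => K * Y w) := bmM (bm_cst K) bY.
have hF' : expect P (fun w => F w + K) = expect P F + K.
  by rewrite (ExD bF (bm_cst K)) Ex_cst.
have hY' : expect P (fun w => Y w + M) = M.
  by rewrite (ExD bY (bm_cst M)) Ex_cst EY add0r.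
have e : (fun w => (F w + K) * (Y w + M))%R =
  (fun w => (F w * Y w + M * F w) + (K * Y w + K * M))%R.
  by apply/funext => w; ring.
have hE : expect P (fun w => (F w + K) * (Y w + M)) =
    expect P (fun w => F w * Y w) + M * expect P F + K * M.
  rewrite e (ExD (bmD bFY bMF) (bmD bKY (bm_cst _))) (ExD bFY bMF).
  rewrite (ExD bKY (bm_cst _)) (ExZ M bF) (ExZ K bY) EY Ex_cst; ring.
rewrite hE hF' hY' in h.
apply: (addIr (M * expect P F + K * M)%R).
by rewrite add0r addrA h; ring.
Qed.

End Indep2.

Section MDPq.
Context (R : realType) (S A : finType).
Variables (q : trans R S A) (pol : policy R S A).
Hypothesis hq : is_trans q.
Hypothesis hpol : is_policy pol.

Lemma sd_ge0 i h x : 0 <= state_dist q pol i h x.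
Proof.
elim: h x => [|h IH] x /=; first by case: ifP.
apply: sumr_ge0 => y _; apply: mulr_ge0 => //; apply: sumr_ge0 => a _.
by apply: mulr_ge0; [exact: (hpol y).1 | exact: (hq y a).1].
Qed.

Lemma sd_sum i h : \sum_x state_dist q pol i h x = 1.
Proof.
elim: h => [|h IH] /=.
  by rewrite (bigD1 i) //= eqxx big1 ?addr0 // => x /negbTE ->.
rewrite exchange_big /= -[RHS]IH; apply: eq_bigr => x _.
rewrite -mulr_sumr exchange_big /=.
under eq_bigr do rewrite -mulr_sumr (hq _ _).2 mulr1.
by rewrite (hpol x).2 mulr1.
Qed.

Lemma sd_le1 i h x : state_dist q pol i h x <= 1.
Proof.
rewrite -(sd_sum i h) (bigD1 x) //= lerDl; apply: sumr_ge0 => y _; exact: sd_ge0.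
Qed.

Lemma pol_le1 x a : pol x a <= 1.
Proof.
rewrite -(hpol x).2 (bigD1 a) //= lerDl; apply: sumr_ge0 => b _; exact: (hpol x).1.
Qed.

Definition Rm (r : S -> A -> R) := \sum_x \sum_a `|r x a|.

Lemma er_bound r i h : `|exp_reward r q pol i h| <= Rm r.
Proof.
rewrite /exp_reward; apply: (le_trans (ler_norm_sum _ _ _)); apply: ler_sum => x _.
rewrite normrM (ger0_norm (sd_ge0 _ _ _)).
apply: (le_trans (ler_wpM2r (normr_ge0 _) (sd_le1 i h x))); rewrite mul1r.
apply: (le_trans (ler_norm_sum _ _ _)); apply: ler_sum => a _.
rewrite normrM (ger0_norm ((hpol x).1 a)).
by rewrite -[leRHS]mul1r ler_wpM2r // pol_le1.
Qed.

Lemma Rm_ge0 r : 0 <= Rm r.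
Proof. by apply: sumr_ge0 => x _; apply: sumr_ge0. Qed.

Definition useq r gamma i : R^o ^nat := fun h => gamma ^+ h * exp_reward r q pol i h.

Lemma useq_bound r gamma i h : 0 <= gamma ->
  `|useq r gamma i h| <= geometric (Rm r) gamma h.
Proof.
move=> g0; rewrite /useq /geometric /= normrM normrX (ger0_norm g0) mulrC.
by rewrite ler_wpM2r ?exprn_ge0 // er_bound.
Qed.

Lemma value_cvg r gamma i : 0 <= gamma < 1 -> cvgn (series (useq r gamma i)).
Proof.
move=> /andP[g0 g1]; apply: normed_cvg.
apply: (@series_le_cvg _ _ (geometric (Rm r) gamma)).
- by move=> n; exact: normr_ge0.
- by move=> n; rewrite /geometric /= mulr_ge0 ?exprn_ge0 ?Rm_ge0.
- by move=> n; exact: useq_bound.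
- by apply: is_cvg_geometric_series; rewrite ger0_norm.
Qed.

Lemma valueE r gamma i : value r gamma q pol i = limn (series (useq r gamma i)).
Proof. by []. Qed.

Lemma value_bound r gamma i : 0 <= gamma < 1 ->
  `|value r gamma q pol i| <= Rm r / (1 - gamma).
Proof.
move=> /[dup] gg /andP[g0 g1].
have hb n : `|series (useq r gamma i) n| <= Rm r / (1 - gamma).
  rewrite /series /=; apply: (le_trans (ler_norm_sum _ _ _)).
  apply: (@le_trans _ _ (\sum_(0 <= k < n) geometric (Rm r) gamma k)).
    by apply: ler_sum => k _; exact: useq_bound.
  have := geometric_seriesE (Rm r) (negbT (lt_eqF g1) : gamma != 1).
  move/(congr1 (fun f => f n)); rewrite /series /= => ->.
  rewrite ler_pM2r ?invr_gt0 ?subr_gt0 //.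
  by rewrite -[leRHS]mulr1 ler_wpM2l ?Rm_ge0 // lerBlDr lerDl exprn_ge0.
rewrite valueE ler_norml; apply/andP; split.
  apply: limr_ge; first exact: value_cvg.
  by near=> n; have := hb n; rewrite ler_norml => /andP[].
apply: limr_le; first exact: value_cvg.
by near=> n; have := hb n; rewrite ler_norml => /andP[].
Unshelve. all: by end_near.
Qed.

End MDPq.

Section Meas.
Context (R : realType) (S A : finType) (dT : measure_display) (T : measurableType dT).
Variables (qq : T -> trans R S A) (pol : policy R S A).
Hypothesis mqq : forall x a y, measurable_fun setT (fun w => qq w x a y).
Hypothesis hqq : forall w, is_trans (qq w).
Hypothesis hpol : is_policy pol.

Lemma sd_meas i h x : measurable_fun setT (fun w => state_dist (qq w) pol i h x).
Proof.
elim: h x => [|h IH] x /=; first exact: measurable_cst.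
apply: measurable_sum => y.
apply: measurable_funM => //.
apply: measurable_sum => a.
apply: measurable_funM => //; exact: measurable_cst.
Qed.

Lemma er_meas r i h : measurable_fun setT (fun w => exp_reward r (qq w) pol i h).
Proof.
rewrite /exp_reward; apply: measurable_sum => x.
apply: measurable_funM; first exact: sd_meas.
exact: measurable_cst.
Qed.

Lemma value_meas r gamma i : 0 <= gamma < 1 ->
  measurable_fun setT (fun w => value r gamma (qq w) pol i).
Proof.
move=> hg.
have := @measurable_fun_cvg _ _ _ setT (fun n w => (series (useq (qq w) pol r gamma i) n : R)) (fun w => value r gamma (qq w) pol i).
apply.
- move=> n; rewrite /series /=; apply: measurable_sum => h.
  apply: measurable_funM; first exact: measurable_cst.
  exact: er_meas.
- by move=> w _; exact: (value_cvg (hqq w) hpol hg).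
Qed.
End Meas.

Section Eq.
Context (R : realType) (S A : finType).
Variables (q1 q2 : trans R S A) (pol : policy R S A) (good : S -> Prop).
Hypothesis hq1 : is_trans q1.
Hypothesis hpol : is_policy pol.
Hypothesis clos : forall x a y, good x -> 0 < q1 x a y -> good y.
Hypothesis agree : forall x, good x -> forall a y, q1 x a y = q2 x a y.

Lemma sd_support i h x : good i -> state_dist q1 pol i h x != 0 -> good x.
Proof.
move=> gi; elim: h x => [|h IH] x /=.
  by case: (x =P i) => [-> //|_]; rewrite eqxx.
move=> hne; have [//|ngx] := pselect (good x).
move: hne; rewrite big1 ?eqxx // => y _.
have [->|/IH gy] := eqVneq (state_dist q1 pol i h y) 0; first by rewrite mul0r.
rewrite big1 ?mulr0 // => a _.
have := (hq1 y a).1 x; rewrite le_eqVlt => /orP[/eqP<-|/(clos gy)//]; first by rewrite mulr0.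
Qed.

Lemma sd_eq i h x : good i -> state_dist q1 pol i h x = state_dist q2 pol i h x.
Proof.
move=> gi; elim: h x => [|h IH] x //=.
apply: eq_bigr => y _; rewrite -IH.
have [->|ne] := eqVneq (state_dist q1 pol i h y) 0; first by rewrite !mul0r.
congr (_ * _); apply: eq_bigr => a _; rewrite agree //; exact: (sd_support gi ne).
Qed.

Lemma value_eq r gamma i : good i -> value r gamma q1 pol i = value r gamma q2 pol i.
Proof.
move=> gi; rewrite /value.
suff -> : (fun n => \sum_(0 <= h < n) gamma ^+ h * exp_reward r q1 pol i h) =
  (fun n => \sum_(0 <= h < n) gamma ^+ h * exp_reward r q2 pol i h) by [].
apply/funext => n; apply: eq_bigr => h _; congr (_ * _).
rewrite /exp_reward; apply: eq_bigr => x _; by rewrite sd_eq.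
Qed.
End Eq.

Section Main.
Context (R : realType) (S A : finType) (d : measure_display)
  (Omega : measurableType d) (P : probability Omega R)
  (r : S -> A -> R) (gamma : R) (p : Omega -> trans R S A)
  (pol : policy R S A) (s : S).
Hypothesis hg : 0 <= gamma < 1.
Hypothesis rp : random_trans p.
Hypothesis ip : indep_rows P p.
Hypothesis ac : acyclic p.
Hypothesis hpol : is_policy pol.

Local Notation T1 := (g_sigma_algebraType (E1 p s)).
Local Notation T2 := (g_sigma_algebraType (E2 p s)).

Definition p' : Omega -> trans R S A :=
  fun w x a y => if x == s then (y == s)%:R else p w x a y.

Lemma p'_trans w : is_trans (p' w).
Proof.
move=> x a; rewrite /p'; case: eqP => _; last exact: rp.1 w x a.
split => [y|]; first by case: (y == s).
by rewrite (bigD1 s) //= eqxx big1 ?addr0 // => y /negbTE ->.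
Qed.

Lemma p'_meas2 x a y : measurable_fun [set: T2] ((fun w => p' w x a y) : T2 -> R).
Proof.
rewrite /p'; case: eqP => [_|/eqP xs]; first exact: measurable_cst.
move=> _ B mB; apply: sub_gen_smallest.
exists (fun x' a' y' => if (x', a', y') == (x, a, y) then B else setT).
  by move=> x' a' y'; case: ifP.
apply/seteqP; split => w /=.
  by move=> [_ hB] x' a' y' _; case: eqP => [[-> -> ->]|].
by move=> h; split => //; have := h x a y xs; rewrite eqxx.
Qed.

Lemma p_meas1 a y : measurable_fun [set: T1] ((fun w => p w s a y) : T1 -> R).
Proof.
move=> _ B mB; apply: sub_gen_smallest.
exists (fun a' y' => if (a', y') == (a, y) then B else setT).
  by move=> a' y'; case: ifP.
apply/seteqP; split => w /=.
  by move=> [_ hB] a' y'; case: eqP => [[-> ->]|].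
by move=> h; split => //; have := h a y; rewrite eqxx.
Qed.

Lemma p_le1 w x a y : p w x a y <= 1.
Proof.
have [h0 h1] := rp.1 w x a.
rewrite -h1 (bigD1 y) //= lerDl; apply: sumr_ge0 => z _; exact: h0.
Qed.

Lemma p_bnd x a y : bnd (fun w => p w x a y).
Proof.
exists 1 => w; rewrite ger0_norm; [exact: p_le1 | exact: (rp.1 w x a).1].
Qed.

Lemma p_bm x a y : bm (fun w => p w x a y).
Proof. by split; [exact: rp.2 | exact: p_bnd]. Qed.

Definition V' w i := value r gamma (p' w) pol i.

Lemma V'_meas2 i : measurable_fun [set: T2] ((fun w => V' w i) : T2 -> R).
Proof. exact: (value_meas p'_meas2 p'_trans hpol r i hg). Qed.

Lemma V'_bnd i : bnd (fun w => V' w i).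
Proof. by exists (Rm r / (1 - gamma)) => w; exact: (value_bound (p'_trans w) hpol r i hg). Qed.

Lemma V'_bm i : bm (fun w => V' w i).
Proof. by split; [exact: mfun_sub (subsigP (E2_meas rp)) (V'_meas2 i) | exact: V'_bnd]. Qed.

Definition Vb i := expect P (fun w => V' w i).
Definition Y w i := V' w i - Vb i.

Lemma Y_meas2 i : measurable_fun [set: T2] ((fun w => Y w i) : T2 -> R).
Proof. by apply: measurable_funB; [exact: V'_meas2 | exact: measurable_cst]. Qed.

Lemma Y_bnd i : bnd (fun w => Y w i).
Proof. by apply: bndB; [exact: V'_bnd | exact: bnd_cst]. Qed.

Lemma Y_bm i : bm (fun w => Y w i).
Proof. by apply: bmB; [exact: V'_bm | exact: bm_cst]. Qed.

Lemma EY i : expect P (fun w => Y w i) = 0.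
Proof. by rewrite /Y (ExB (V'_bm i) (bm_cst _)) Ex_cst subrr. Qed.


Definition absorbing x := forall w a, p w x a x = 1.

Lemma absorb_zero x w a y : absorbing x -> y != x -> p w x a y = 0.
Proof.
move=> hx yx; have [h0 h1] := rp.1 w x a.
have hs : \sum_(i | i != x) p w x a i = 0.
  move: h1; rewrite (bigD1 x) //= hx => /eqP; rewrite -{2}[1]addr0 => /eqP.
  exact: addrI.
have := psumr_eq0P _ hs; move=> /(_ (fun i _ => h0 i)) h; exact: h y yx.
Qed.

Lemma absorb_eq x w a y : absorbing x -> 0 < p w x a y -> y = x.
Proof.
move=> hx hp; apply/eqP; apply: contraTT hp => yx.
by rewrite absorb_zero // ltxx.
Qed.

Lemma dich i : (forall w a, pol s a * p w s a i = 0) \/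
  (forall w, value r gamma (p w) pol i = V' w i).
Proof.
have [h|h] := pselect (forall w a, pol s a * p w s a i = 0); [by left | right].
move/existsNP: h => [w /existsNP [a hwa]].
have pos : 0 < p w s a i.
  rewrite lt_def (rp.1 w s a).1 andbT.
  by apply/eqP => h0; apply: hwa; rewrite h0 mulr0.
have [rank hr] := ac.
have [sabs|snabs] := pselect (absorbing s).
  move=> w'; rewrite /V'; congr value.
  apply/funext => x; apply/funext => a'; apply/funext => y; rewrite /p'.
  case: eqP => [->|] //.
  have [->|ys] := eqVneq y s; first by rewrite sabs.
  by rewrite absorb_zero.
have ri : (rank s < rank i)%N.
  by case: (hr _ _ _ _ pos) => // habs; exfalso; exact: snabs habs.
pose good x := (rank s < rank x)%N \/ (x != s /\ absorbing x).
move=> w'.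
have clos : forall x b y, good x -> 0 < p w' x b y -> good y.
  move=> x b y gx pxy; have [xabs|xnabs] := pselect (absorbing x).
    by rewrite (absorb_eq xabs pxy).
  case: (hr _ _ _ _ pxy) => [rxy|//].
  case: gx => [rsx|[_ //]]; left; exact: ltn_trans rsx rxy.
have agree : forall x, good x -> forall b y, p w' x b y = p' w' x b y.
  move=> x gx b y; rewrite /p'; suff -> : (x == s) = false by [].
  case: gx => [rsx|[xs _]]; last exact: negbTE.
  by apply/negbTE; apply: contraTneq rsx => ->; rewrite ltnn.
exact: (value_eq pol (rp.1 w') clos agree r gamma (or_introl ri)).
Qed.

Lemma var_next_ext (q : trans R S A) (f g : S -> R) :
  (forall i, (forall a, pol s a * q s a i = 0) \/ f i = g i) ->
  var_next q pol s f = var_next q pol s g.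
Proof.
move=> h.
have hm : mean_next q pol s f = mean_next q pol s g.
  apply: eq_bigr => a _; apply: eq_bigr => y _.
  by case: (h y) => [/(_ a) -> | ->]; rewrite ?mul0r.
rewrite !var_nextE hm; apply: eq_bigr => a _; apply: eq_bigr => y _.
by case: (h y) => [/(_ a) -> | ->]; rewrite ?mul0r.
Qed.

Lemma sum1 w : \sum_a \sum_y pol s a * p w s a y = 1.
Proof.
under eq_bigr do rewrite -mulr_sumr (rp.1 w s _).2 mulr1.
exact: (hpol s).2.
Qed.

Lemma bmX2 (X : Omega -> R) : bm X -> bm (fun w => X w ^+ 2).
Proof.
move=> hX; have -> : (fun w => X w ^+ 2) = (fun w => X w * X w).
  by apply/funext => w; rewrite expr2.
exact: bmM.
Qed.

Theorem main_thm :
  let Vbar := fun s' => expect P (fun w => value r gamma (p w) pol s') in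
  (0 <= \int[P]_w (var_next (p w) pol s (value r gamma (p w) pol)
                    - var_next (p w) pol s Vbar)%:E)%E.
Proof.
cbv zeta.
pose Vbar := fun s' => expect P (fun w => value r gamma (p w) pol s').
pose F a y w := pol s a * p w s a y * (Vb y - mean_next (p w) pol s Vb).
pose D w := var_next (p w) pol s (Y w) + 2 * \sum_a \sum_y F a y w * Y w y.
have hD w : var_next (p w) pol s (value r gamma (p w) pol)
    - var_next (p w) pol s Vbar = D w.
  have e1 : var_next (p w) pol s (value r gamma (p w) pol) =
      var_next (p w) pol s (V' w).
    apply: var_next_ext => i; case: (dich i) => [h|h].
      by left => a; exact: h.
    by right; exact: h.
  have e2 : var_next (p w) pol s Vbar = var_next (p w) pol s Vb.
    apply: var_next_ext => i; case: (dich i) => [h|h].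
      by left => a; exact: h.
    right; rewrite /Vbar /Vb; congr expect; apply/funext => w'; exact: h.
  have e3 : V' w = (fun y => Y w y + Vb y).
    by apply/funext => y; rewrite /Y subrK.
  rewrite e1 e2 e3 var_add cov_alt; last exact: sum1.
  rewrite /D /F; ring.
under eq_integral => w _ do rewrite hD.
have bF a y : bnd (F a y).
  rewrite /F /mean_next; apply: bndM.
    by apply: bndM; [exact: bnd_cst | exact: p_bnd].
  apply: bndB; first exact: bnd_cst.
  apply: bnd_sum => b; apply: bnd_sum => z; apply: bndM; last exact: bnd_cst.
  by apply: bndM; [exact: bnd_cst | exact: p_bnd].
have mF a y : measurable_fun [set: T1] ((F a y) : T1 -> R).
  rewrite /F /mean_next; apply: measurable_funM.
    by apply: measurable_funM; [exact: measurable_cst | exact: p_meas1].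
  apply: measurable_funB; first exact: measurable_cst.
  apply: measurable_sum => b; apply: measurable_sum => z.
  apply: measurable_funM; last exact: measurable_cst.
  by apply: measurable_funM; [exact: measurable_cst | exact: p_meas1].
have bmF a y : bm (F a y).
  by split; [exact: mfun_sub (subsigP (E1_meas rp)) (mF a y) | exact: bF].
have bvar : bm (fun w => var_next (p w) pol s (Y w)).
  rewrite /var_next /=; apply: bm_sum => a; apply: bm_sum => y.
  apply: bmM; first by apply: bmM; [exact: bm_cst | exact: p_bm].
  apply: bmX2; apply: bmB; first exact: Y_bm.
  apply: bm_sum => b; apply: bm_sum => z; apply: bmM; last exact: Y_bm.
  by apply: bmM; [exact: bm_cst | exact: p_bm].
have bsum : bm (fun w => \sum_a \sum_y F a y w * Y w y).
  apply: bm_sum => a; apply: bm_sum => y; apply: bmM; [exact: bmF | exact: Y_bm].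
have bD : bm D by apply: bmD => //; apply: bmM => //; exact: bm_cst.
rewrite (int_Ex bD) lee_fin /D (ExD bvar (bmM (bm_cst 2) bsum)) (ExZ 2 bsum).
have hc : expect P (fun w => \sum_a \sum_y F a y w * Y w y) = 0.
  rewrite Ex_sum; last first.
    by move=> a; apply: bm_sum => y; apply: bmM; [exact: bmF | exact: Y_bm].
  rewrite big1 // => a _.
  rewrite Ex_sum; last by move=> y; apply: bmM; [exact: bmF | exact: Y_bm].
  rewrite big1 // => y _.
  exact: (Ex_indep0 rp ip (mF a y) (bF a y) (Y_meas2 y) (Y_bnd y) (EY y)).
rewrite hc mulr0 addr0.
apply: Ex_ge0 => w; rewrite var_nextE.
apply: sumr_ge0 => a _; apply: sumr_ge0 => y _; apply: mulr_ge0; last exact: sqr_ge0.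
by apply: mulr_ge0; [exact: (hpol s).1 | exact: (rp.1 w s a).1].
Qed.

End Main.

Unset Implicit Arguments.

Theorem lemma7 (R : realType) (S A : finType) (d : measure_display)
  (Omega : measurableType d) (P : probability Omega R)
  (r : S -> A -> R) (gamma : R) (p : Omega -> trans R S A)
  (pol : policy R S A) (s : S) :
  0 <= gamma < 1 ->
  random_trans p -> indep_rows P p -> acyclic p ->
  is_policy pol ->
  let Vbar := fun s' => expect P (fun w => value r gamma (p w) pol s') in
  (0 <= \int[P]_w (var_next (p w) pol s (value r gamma (p w) pol)
                    - var_next (p w) pol s Vbar)%:E)%E.
Proof.
move=> hg rp ip ac hpol.
have := main_thm r s hg rp ip ac hpol.
exact.
Qed.
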